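(* Let $G$ be a connected graph with $n$ vertices. For any $i\in V(G)$, \[ nKf_i(G)-Kf(G)\leq\frac{n-1}{\alpha_i(G)}. \]
   Context: $G$ is a finite simple graph with vertex set $[n]$ and Laplacian matrix $\mathcal{L}_G=D-A$. For a vertex $i$, $\alpha_i(G)=\min\{\mathbf{x}^\top\mathcal{L}_G\mathbf{x} : \mathbf{x}\in\mathbb{R}^n_+,\ \sum_j x_j^2=1,\ x_i=0\}$ (the inverse Perron value of $i$); for connected $G$ this equals the smallest eigenvalue of the principal submatrix $\mathcal{L}_G(i)$ obtained by deleting row and column $i$. The resistance distance $r_{ij}(G)$ is the effective resistance between $i$ and $j$ when every edge is a unit resistor. The resistance centrality of $i$ is $Kf_i(G)=\sum_{j\in V(G)}r_{ij}(G)$ and the Kirchhoff index is $Kf(G)=\sum_{\{i,j\}\subseteq V(G)}r_{ij}(G)$ (sum over unordered pairs). *)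

(* Defs.v *)
From HB Require Import structures.
From mathcomp Require Import all_boot all_order all_algebra.
From mathcomp Require Import classical_sets reals.
Set Implicit Arguments. Unset Strict Implicit. Unset Printing Implicit Defensive.
Import Order.TTheory GRing.Theory Num.Theory.
Local Open Scope ring_scope.
Local Open Scope classical_set_scope.

(* A finite simple graph on vertex set 'I_n (= [n]) is given by an adjacency
   relation [e], assumed symmetric and irreflexive (hypotheses of the theorem). *)

Section Graph.
Variables (R : realType) (n : nat) (e : rel 'I_n).

Definition deg (k : 'I_n) : nat := #|[set j | e k j]|.

Definition laplacian : 'M[R]_n :=
  \matrix_(a, b) ((if a == b then (deg a)%:R else 0) - (e a b)%:R).

Definition qform (x : 'cV[R]_n) : R := (x^T *m laplacian *m x) 0 0.

(* inverse Perron value alpha_i(G) = min { x^T L x : x >= 0, sum x_j^2 = 1, x_i = 0 }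
   (rendered as the infimum of that set, which is attained when it is nonempty) *)
Definition alpha (i : 'I_n) : R :=
  inf [set qform x | x in [set x : 'cV[R]_n |
        (forall j, 0 <= x j 0) /\ \sum_j (x j 0) ^+ 2 = 1 /\ x i 0 = 0]].

(* Electrical network with unit resistors: v is a vector of node potentials
   realizing a unit current entering at i and leaving at j (Kirchhoff's current
   law + Ohm's law: L v = e_i - e_j). *)
Definition unit_current_potential (i j : 'I_n) (v : 'cV[R]_n) : Prop :=
  forall k, (laplacian *m v) k 0 = (k == i)%:R - (k == j)%:R.

(* resistance distance r_ij = v_i - v_j for such a potential
   (well defined for a connected graph) *)
Definition resistance (i j : 'I_n) : R :=
  xget 0 [set r | exists v, unit_current_potential i j v /\ r = v i 0 - v j 0].

Definition Kf_vertex (i : 'I_n) : R := \sum_j resistance i j.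

Definition Kf : R := \sum_(i < n) \sum_(j < n | (i < j)%N) resistance i j.

End Graph.

(* Main.v *)
Require Import Defs.
From HB Require Import structures.
From mathcomp Require Import all_boot all_order all_algebra.
From mathcomp Require Import classical_sets reals boolp.
From mathcomp Require Import ring lra.
Set Implicit Arguments. Unset Strict Implicit. Unset Printing Implicit Defensive.
Import Order.TTheory GRing.Theory Num.Theory.
Local Open Scope ring_scope.

Section Aux.
Variables (R : realType) (n : nat) (e : rel 'I_n).
Hypothesis e_sym : symmetric e.

Definition Lf (b : 'I_n -> R) (k : 'I_n) : R := \sum_l (e k l)%:R * (b k - b l).
Definition Bf (a b : 'I_n -> R) : R := \sum_m a m * Lf b m.

Lemma deg_sum k : (deg e k)%:R = \sum_l (e k l)%:R :> R.
Proof.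
rewrite /deg -sum1_card natr_sum big_mkcond /=; apply: eq_bigr => l _.
have -> : (l \in in_set [set j | e k j]) = e k l.
  by apply/idP/idP; rewrite in_setE.
by case: (e k l).
Qed.

Lemma lapE (v : 'cV[R]_n) k : (laplacian R e *m v) k 0 = Lf (fun l => v l 0) k.
Proof.
rewrite mxE /Lf.
transitivity (\sum_l ((if k == l then (deg e k)%:R else 0) * v l 0 - (e k l)%:R * v l 0)).
  by apply: eq_bigr => l _; rewrite mxE mulrBl.
rewrite sumrB (bigD1 k) //= eqxx big1 ?addr0; last by move=> l /negbTE; rewrite eq_sym => ->; rewrite mul0r.
rewrite deg_sum mulr_suml -sumrB; apply: eq_bigr => l _; ring.
Qed.

Lemma Lf_sum0 b : \sum_k Lf b k = 0.
Proof.
rewrite /Lf.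
have H : \sum_k \sum_l (e k l)%:R * (b k - b l) = \sum_k \sum_l (e k l)%:R * (b l - b k) :> R.
  by rewrite exchange_big; apply: eq_bigr => k _; apply: eq_bigr => l _; rewrite e_sym.
have : 2 * \sum_k \sum_l (e k l)%:R * (b k - b l) = 0 :> R.
  rewrite mulr2n mulrDl mul1r {2}H -big_split /= big1 // => k _.
  by rewrite -big_split big1 // => l _ /=; ring.
by move/eqP; rewrite mulf_eq0 pnatr_eq0 /= => /eqP.
Qed.

Lemma Bf_sym a b : Bf a b = Bf b a.
Proof.
rewrite /Bf /Lf.
have E x y : \sum_m x m * \sum_l (e m l)%:R * (y m - y l) =
   \sum_m \sum_l (e m l)%:R * (x m * y m) - \sum_m \sum_l (e m l)%:R * (x m * y l) :> R.
  rewrite -sumrB; apply: eq_bigr => m _; rewrite mulr_sumr -sumrB; apply: eq_bigr => l _; ring.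
rewrite !E; congr (_ - _).
  by apply eq_bigr => m _; apply eq_bigr => l _; rewrite [a m * _]mulrC.
by rewrite exchange_big; apply eq_bigr => m _; apply eq_bigr => l _; rewrite e_sym [a _ * _]mulrC.
Qed.

Lemma Bf_self a : 2 * Bf a a = \sum_m \sum_l (e m l)%:R * (a m - a l) ^+ 2.
Proof.
have H : Bf a a = \sum_m \sum_l (e m l)%:R * (a l * (a l - a m)).
  rewrite /Bf /Lf exchange_big; apply: eq_bigr => m _; rewrite mulr_sumr; apply: eq_bigr => l _.
  rewrite e_sym; ring.
rewrite mulr2n mulrDl mul1r {2}H /Bf /Lf -big_split; apply: eq_bigr => m _ /=.
rewrite mulr_sumr -big_split; apply: eq_bigr => l _ /=; ring.
Qed.

Lemma Bf_ge0 a : 0 <= Bf a a.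
Proof.
have : 0 <= 2 * Bf a a.
  rewrite Bf_self; apply: sumr_ge0 => m _; apply: sumr_ge0 => l _.
  by apply: mulr_ge0; [apply: ler0n | apply: sqr_ge0].
by rewrite pmulr_rge0.
Qed.


Hypothesis e_conn : forall j k : 'I_n, connect e j k.

Lemma Lf_ext f g k : (forall l, f l = g l) -> Lf f k = Lf g k.
Proof. by move=> H; rewrite /Lf; apply eq_bigr => l _; rewrite !H. Qed.

Lemma LfB f g k : Lf (fun l => f l - g l) k = Lf f k - Lf g k.
Proof. by rewrite /Lf -sumrB; apply eq_bigr => l _; ring. Qed.

Lemma ker_const x : Bf x x = 0 -> forall j k, x j = x k.
Proof.
move=> H0.
have H2 : \sum_m \sum_l (e m l)%:R * (x m - x l) ^+ 2 = 0 :> R by rewrite -Bf_self H0 mulr0.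
have Hge m l : 0 <= (e m l)%:R * (x m - x l) ^+ 2 :> R by apply: mulr_ge0; [apply: ler0n|apply: sqr_ge0].
have Hedge m l : e m l -> x m = x l.
  move=> eml.
  have Hm : \sum_l (e m l)%:R * (x m - x l) ^+ 2 = 0 :> R.
    apply: (psumr_eq0P _ H2) => // m' _; apply: sumr_ge0 => l' _; exact: Hge.
  have : (e m l)%:R * (x m - x l) ^+ 2 = 0 :> R.
    by apply: (psumr_eq0P _ Hm) => // l' _; exact: Hge.
  rewrite eml mul1r => /eqP; rewrite sqrf_eq0 subr_eq0 => /eqP //.
move=> j k; have /connectP [p pth ->] := e_conn j k.
elim: p j pth => [|a p IH] j //= /andP [ja pth].
by rewrite (Hedge _ _ ja) IH.
Qed.

Lemma exists_sol (i : 'I_n) (b : 'I_n -> R) : \sum_k b k = 0 ->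
  exists x : 'I_n -> R, x i = 0 /\ forall k, Lf x k = b k.
Proof.
move=> bsum.
pose L' : 'M[R]_n := \matrix_(k, l) if k == i then (l == i)%:R else laplacian R e k l.
have L'E (x : 'cV[R]_n) k : (L' *m x) k 0 = if k == i then x i 0 else Lf (fun l => x l 0) k.
  rewrite -lapE !mxE /L'; case: (eqVneq k i) => [->|ki].
    rewrite (bigD1 i) //= mxE !eqxx mul1r big1 ?addr0 // => l li.
    by rewrite mxE eqxx (negbTE li) mul0r.
  by apply eq_bigr => l _; rewrite mxE (negbTE ki).
have L'u : L' \in unitmx.
  rewrite -unitmx_tr -row_free_unit; apply: inj_row_free => v Hv.
  have Hx k : (L' *m v^T) k 0 = 0.
    have -> : L' *m v^T = (v *m L'^T)^T by rewrite trmx_mul trmxK.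
    by rewrite Hv trmx0 mxE.
  pose x l := v^T l 0.
  have xi : x i = 0 by have := Hx i; rewrite L'E eqxx.
  have Lx k : Lf x k = 0.
    case: (eqVneq k i) => [->|ki].
      apply/eqP; rewrite -(Lf_sum0 x) (bigD1 i) //=.
      rewrite big1 ?addr0 // => l li; have := Hx l; rewrite L'E (negbTE li); exact.
    by have := Hx k; rewrite L'E (negbTE ki).
  have Bx : Bf x x = 0 by rewrite /Bf big1 // => m _; rewrite Lx mulr0.
  apply/rowP => l; have := ker_const Bx l i; rewrite xi /x !mxE => ->; by [].
pose b' : 'cV[R]_n := \col_k (if k == i then 0 else b k).
exists (fun l => (invmx L' *m b') l 0).
have Hs : L' *m (invmx L' *m b') = b' by rewrite mulKVmx.
have Hk k : (L' *m (invmx L' *m b')) k 0 = b' k 0 by rewrite Hs.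
split; first by have := Hk i; rewrite L'E eqxx !mxE eqxx.
have Hne k : k != i -> Lf (fun l => (invmx L' *m b') l 0) k = b k.
  by move=> ki; have := Hk k; rewrite L'E (negbTE ki) !mxE (negbTE ki).
move=> k; case: (eqVneq k i) => [->|ki]; last exact: Hne.
apply/eqP; rewrite -subr_eq0.
have := Lf_sum0 (fun l => (invmx L' *m b') l 0); rewrite (bigD1 i) //=.
rewrite (eq_bigr (fun k => b k)); last by move=> l li; apply: Hne.
move: bsum; rewrite (bigD1 i) //= => bs.
have -> : \sum_(l < n | l != i) b l = - b i by apply/eqP; rewrite -addr_eq0 addrC bs.
by move=> ->.
Qed.

Lemma res_eq j k (f : 'I_n -> R) : (forall m, Lf f m = (m == j)%:R - (m == k)%:R) ->
  resistance R e j k = f j - f k.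
Proof.
move=> Hf; rewrite /resistance; apply: xget_unique.
  exists (\col_m f m); split; last by rewrite !mxE.
  by move=> m; rewrite lapE -Hf; apply: Lf_ext => l; rewrite mxE.
move=> r [v [Hv ->]].
pose d l := v l 0 - f l.
have Ld m : Lf d m = 0.
  by rewrite LfB Hf; move: (Hv m); rewrite lapE => ->; rewrite subrr.
have Bd : Bf d d = 0 by rewrite /Bf big1 // => m _; rewrite Ld mulr0.
have := ker_const Bd j k; rewrite /d => H.
have E1 : v j 0 = (v j 0 - f j) + f j by rewrite subrK.
have E2 : v k 0 = (v k 0 - f k) + f k by rewrite subrK.
rewrite E1 E2 H opprD addrACA subrr add0r. by [].
Qed.


Lemma sum_delta (j : 'I_n) : \sum_m ((m == j)%:R : R) = 1.
Proof. by rewrite (bigD1 j) //= eqxx big1 ?addr0 // => m /negbTE ->. Qed.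

Lemma sum_mul_delta (a : 'I_n -> R) (j : 'I_n) : \sum_m a m * (m == j)%:R = a j.
Proof. by rewrite (bigD1 j) //= eqxx mulr1 big1 ?addr0 // => m /negbTE ->; rewrite mulr0. Qed.

Lemma Lf_sum (I : finType) (f : I -> 'I_n -> R) k :
  Lf (fun m => \sum_j f j m) k = \sum_j Lf (f j) k.
Proof.
rewrite /Lf exchange_big; apply eq_bigr => l _.
by rewrite -sumrB mulr_sumr.
Qed.

Lemma Bf_ext f g : (forall m, f m = g m) -> Bf f f = Bf g g.
Proof. by move=> H; rewrite /Bf; apply eq_bigr => m _; rewrite H (Lf_ext _ H). Qed.

Lemma Bf_expand c a b :
  Bf (fun m => c * a m - b m) (fun m => c * a m - b m) =
  c ^+ 2 * Bf a a - 2 * c * Bf a b + Bf b b.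
Proof.
have -> : 2 * c * Bf a b = c * Bf a b + c * Bf b a by rewrite (Bf_sym a b); ring.
rewrite /Bf /Lf !mulr_sumr -big_split /= -sumrB -big_split /=; apply eq_bigr => m _.
rewrite !mulr_sumr -big_split /= -sumrB -big_split /=; apply eq_bigr => l _; ring.
Qed.

Lemma Bf_scale c a :
  Bf (fun m => c * a m) (fun m => c * a m) = c ^+ 2 * Bf a a.
Proof.
rewrite /Bf /Lf !mulr_sumr; apply eq_bigr => m _.
rewrite !mulr_sumr; apply eq_bigr => l _; ring.
Qed.

Lemma qformE (x : 'cV[R]_n) : qform e x = Bf (fun m => x m 0) (fun m => x m 0).
Proof.
rewrite /qform -mulmxA mxE /Bf; apply eq_bigr => m _.
by rewrite lapE mxE.
Qed.

End Aux.

Lemma half_sum (R : realType) n (f : 'I_n -> 'I_n -> R) :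
  (forall j k, f j k = f k j) -> (forall j, f j j = 0) ->
  \sum_j \sum_k f j k = 2 * \sum_(j < n) \sum_(k < n | (j < k)%N) f j k.
Proof.
move=> fs f0.
have Hs j : \sum_k f j k = \sum_(k < n | (j < k)%N) f j k + \sum_(k < n | (k < j)%N) f j k.
  rewrite [LHS](bigID (fun k : 'I_n => (j < k)%N)) /=; congr (_ + _).
  rewrite [LHS](bigID (fun k : 'I_n => (k < j)%N)) /= [X in _ + X]big1 ?addr0.
    apply eq_bigl => k; rewrite -leqNgt; apply/andP/idP => [[]//|h]; split => //; exact: ltnW.
  move=> k /andP [h1 h2]; have -> : k = j; last by [].
  by apply/val_inj/eqP; rewrite eqn_leq leqNgt h1 leqNgt h2.
have Hx : \sum_(j < n) \sum_(k < n | (k < j)%N) f j k = \sum_(j < n) \sum_(k < n | (j < k)%N) f j k.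
  under eq_bigr do rewrite big_mkcond.
  rewrite exchange_big /=; apply eq_bigr => j _; rewrite [RHS]big_mkcond; apply eq_bigr => k _.
  by rewrite fs.
rewrite (eq_bigr _ (fun j _ => Hs j)) big_split /= Hx; ring.
Qed.

Lemma cauchy_schwarz (R : realType) n (a b : 'I_n -> R) :
  (\sum_k a k * b k) ^+ 2 <= (\sum_k a k ^+ 2) * (\sum_k b k ^+ 2).
Proof.
have E1 : (\sum_k a k ^+ 2) * (\sum_k b k ^+ 2) = \sum_k \sum_l a k ^+ 2 * b l ^+ 2.
  by rewrite mulr_suml; apply eq_bigr => k _; rewrite mulr_sumr.
have E1' : (\sum_k a k ^+ 2) * (\sum_k b k ^+ 2) = \sum_k \sum_l a l ^+ 2 * b k ^+ 2.
  by rewrite mulrC mulr_suml; apply eq_bigr => k _; rewrite mulr_sumr; apply eq_bigr => l _; rewrite mulrC.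
have E2 : (\sum_k a k * b k) ^+ 2 = \sum_k \sum_l (a k * b k) * (a l * b l).
  by rewrite expr2 mulr_suml; apply eq_bigr => k _; rewrite mulr_sumr.
have E : \sum_k \sum_l (a k * b l - a l * b k) ^+ 2 =
    2 * ((\sum_k a k ^+ 2) * (\sum_k b k ^+ 2) - (\sum_k a k * b k) ^+ 2).
  have -> : 2 * ((\sum_k a k ^+ 2) * (\sum_k b k ^+ 2) - (\sum_k a k * b k) ^+ 2) =
     (\sum_k a k ^+ 2) * (\sum_k b k ^+ 2) + (\sum_k a k ^+ 2) * (\sum_k b k ^+ 2)
      - 2 * (\sum_k a k * b k) ^+ 2 by ring.
  rewrite {1}E1 E1' E2 mulr_sumr -big_split /= -sumrB; apply eq_bigr => k _.
  rewrite mulr_sumr -big_split -sumrB /=; apply eq_bigr => l _; ring.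
have : 0 <= 2 * ((\sum_k a k ^+ 2) * (\sum_k b k ^+ 2) - (\sum_k a k * b k) ^+ 2).
  rewrite -E; apply: sumr_ge0 => k _; apply: sumr_ge0 => l _; exact: sqr_ge0.
by rewrite pmulr_rge0 // subr_ge0.
Qed.

Unset Implicit Arguments. Set Strict Implicit. Set Printing Implicit Defensive.
Import Order.TTheory GRing.Theory Num.Theory.

Theorem theorem4p2 (R : realType) (n : nat) (e : rel 'I_n)
    (e_sym : symmetric e) (e_irr : irreflexive e)
    (e_conn : forall j k : 'I_n, connect e j k) (i : 'I_n) :
  n%:R * Kf_vertex R e i - Kf R e <= (n%:R - 1) / alpha R e i.
Proof.
have hu : forall j : 'I_n, exists x : 'I_n -> R,
    x i = 0 /\ forall m, Lf e x m = (m == j)%:R - (m == i)%:R.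
  by move=> j; apply: exists_sol => //; rewrite sumrB !sum_delta subrr.
case/choice: hu => u Hu.
have u_i j : u j i = 0 by case: (Hu j).
have Lu j m : Lf e (u j) m = (m == j)%:R - (m == i)%:R by case: (Hu j) => _ ->.
have Bu a j : Bf e a (u j) = a j - a i.
  rewrite /Bf (eq_bigr (fun m => a m * (m == j)%:R - a m * (m == i)%:R)); last first.
    by move=> m _; rewrite Lu mulrBr.
  by rewrite sumrB !sum_mul_delta.
have usym j k : u j k = u k j.
  by have := Bu (u j) k; rewrite (Bf_sym e_sym) Bu !u_i !subr0.
have u_ii k : u i k = 0 by rewrite usym u_i.
have res j k : resistance R e j k = u j j + u k k - 2 * u j k.
  rewrite (res_eq e_sym e_conn (f := fun l => u j l - u k l)).
    by rewrite (usym k j); ring.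
  by move=> m; rewrite LfB Lu Lu; ring.
set T := \sum_j u j j.
set Q := \sum_j \sum_k u j k.
have KfvE : Kf_vertex R e i = T.
  by rewrite /Kf_vertex; apply eq_bigr => j _; rewrite res !u_ii; ring.
have KfE : Kf R e = n%:R * T - Q.
  have Hs j k : resistance R e j k = resistance R e k j by rewrite !res usym; ring.
  have H0 j : resistance R e j j = 0 by rewrite res; ring.
  have H := half_sum (f := fun j k => resistance R e j k) Hs H0.
  have Ej j : \sum_k (u j j + u k k - 2 * u j k) = n%:R * u j j + T - 2 * \sum_k u j k.
    by rewrite sumrB big_split /= sumr_const card_ord -[u j j *+ n]mulr_natl -mulr_sumr.
  have E : \sum_j \sum_k resistance R e j k = 2 * (n%:R * T - Q).
    rewrite (eq_bigr _ (fun j _ => eq_bigr _ (fun k _ => res j k))).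
    rewrite (eq_bigr _ (fun j _ => Ej j)) sumrB big_split /= -mulr_sumr sumr_const card_ord.
    rewrite -[_ *+ n]mulr_natl -mulr_sumr /T /Q; ring.
  rewrite E in H; have two : (2:R) != 0 by rewrite pnatr_eq0.
  apply: (mulfI two); rewrite /Kf; exact: esym H.
rewrite KfvE KfE (_ : n%:R * T - (n%:R * T - Q) = Q); last by ring.
pose w m := \sum_j u j m.
have w_i : w i = 0 by rewrite /w big1.
have Lw m : Lf e w m = 1 - n%:R * (m == i)%:R.
  rewrite /w Lf_sum (eq_bigr _ (fun j _ => Lu j m)) sumrB sumr_const card_ord -mulr_natl.
  rewrite (eq_bigr (fun j => (j == m)%:R)); last by move=> j _; rewrite eq_sym.
  by rewrite sum_delta !mulr1 mulr_natl.
have QE : Q = \sum_m w m by rewrite /Q /w exchange_big.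
have w_ge0 m : 0 <= w m.
  have [k0 _ Hk0] := arg_minP w (i0 := i) (P := xpredT) isT.
  rewrite leNgt; apply/negP => wm.
  have wk0 : w k0 < 0 by apply: le_lt_trans (Hk0 m isT) wm.
  have k0i : k0 != i by apply/eqP => k0i; move: wk0; rewrite k0i w_i ltxx.
  have := Lw k0; rewrite (negbTE k0i) mulr0 subr0 /Lf => H.
  have : \sum_l (e k0 l)%:R * (w k0 - w l) <= 0.
    apply: sumr_le0 => l _; apply: mulr_ge0_le0; first exact: ler0n.
    by rewrite subr_le0; apply: Hk0.
  by rewrite H ler10.
have Bw : Bf e w w = Q.
  rewrite QE /Bf; apply eq_bigr => m _; rewrite Lw.
  by case: (eqVneq m i) => [->|mi]; rewrite ?w_i ?mul0r // mulr0 subr0 mulr1.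
set S2 := \sum_m w m ^+ 2.
have CS : Q ^+ 2 <= (n%:R - 1) * S2.
  have := cauchy_schwarz (fun m => 1 - (m == i)%:R) w.
  have -> : \sum_k (1 - (k == i)%:R) * w k = Q.
    rewrite QE; apply eq_bigr => m _.
    by case: (eqVneq m i) => [->|mi]; rewrite ?w_i ?mulr0 // subr0 mul1r.
  have -> : \sum_k (1 - (k == i)%:R) ^+ 2 = n%:R - 1 :> R.
    rewrite (eq_bigr (fun k => 1 - (k == i)%:R)); last first.
      by move=> k _; case: (k == i); rewrite ?subrr ?subr0 ?expr0n ?expr1n.
    by rewrite sumrB sum_delta sumr_const card_ord.
  by [].
have Q_ge0 : 0 <= Q by rewrite QE; apply: sumr_ge0 => m _; apply: w_ge0.
have T_ge0 : 0 <= T.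
  rewrite /T; apply: sumr_ge0 => j _.
  by have := Bu (u j) j; rewrite u_i subr0 => <-; apply: Bf_ge0.
set c0 := (T + 2) / (T + 1) ^+ 2.
have c0_gt0 : 0 < c0 by apply: divr_gt0; [lra | apply: exprn_gt0; lra].
rewrite /alpha; set S := (X in inf X).
have lbS : forall y, S y -> c0 <= y.
  move=> _ [x [xpos [xsum xi]] <-]; rewrite qformE.
  set xf := fun m => x m 0.
  set q := Bf e xf xf.
  set s := T + 1.
  have Hj j : 0 <= (s * xf j) ^+ 2 * q - 2 * (s * xf j) * xf j + u j j.
    have := Bf_ge0 e_sym (fun m => (s * xf j) * xf m - u j m).
    rewrite (Bf_expand e_sym) Bu.
    by have := Bu (u j) j; rewrite u_i subr0 => ->; rewrite /xf xi subr0.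
  have : 0 <= s ^+ 2 * q - 2 * s + T.
    have -> : s ^+ 2 * q - 2 * s + T = \sum_j ((s * xf j) ^+ 2 * q - 2 * (s * xf j) * xf j + u j j).
      have -> : s ^+ 2 * q - 2 * s + T = s ^+ 2 * q * \sum_j xf j ^+ 2 - 2 * s * \sum_j xf j ^+ 2 + T.
        by rewrite /xf xsum !mulr1.
      rewrite /T [s ^+ 2 * q * _]mulr_sumr [2 * s * _]mulr_sumr -sumrB -big_split /=; apply eq_bigr => j _; rewrite /xf; ring.
    by apply: sumr_ge0 => j _; apply: Hj.
  move=> H; rewrite /c0 ler_pdivrMr; last by apply: exprn_gt0; lra.
  rewrite /s in H; nra.
have hlb : has_lbound S by exists c0 => y /lbS.
have S2_ge0 : 0 <= S2 by apply: sumr_ge0 => m _; apply: sqr_ge0.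
have n_ge1 : 1 <= n%:R :> R by rewrite ler1n; exact: (leq_ltn_trans (leq0n i) (ltn_ord i)).
case: (eqVneq S2 0) => [S20 | S2ne].
  have w0 m : w m = 0.
    have : w m ^+ 2 = 0.
      by apply: (psumr_eq0P _ S20) => // m' _; apply: sqr_ge0.
    by move/eqP; rewrite sqrf_eq0 => /eqP.
  have -> : Q = 0 by rewrite QE big1.
  apply: divr_ge0; first by rewrite subr_ge0.
  case: (pselect (exists y, S y)) => [[y Sy]|nS].
    apply: le_trans (ltW c0_gt0) _; apply: lb_le_inf; [by exists y | exact: lbS].
  have -> : S = set0 by apply/seteqP; split => y // Sy; apply: nS; exists y.
  by rewrite inf0.
have S2_gt0 : 0 < S2 by rewrite lt_def S2ne S2_ge0.
set sq := Num.sqrt S2.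
have sq_gt0 : 0 < sq by rewrite sqrtr_gt0.
pose x : 'cV[R]_n := \col_m (sq^-1 * w m).
have Sx : S (qform e x).
  exists x => //; split; [|split].
  - by move=> j; rewrite mxE; apply: mulr_ge0; [rewrite invr_ge0 ltW | apply: w_ge0].
  - rewrite (eq_bigr (fun j => sq^-2 * w j ^+ 2)); last by move=> j _; rewrite mxE exprMn exprVn.
    by rewrite -mulr_sumr sqr_sqrtr // mulVf.
  - by rewrite mxE w_i mulr0.
have qx : qform e x = Q / S2.
  rewrite qformE (@Bf_ext _ _ e _ (fun m => sq^-1 * w m)); last by move=> m; rewrite mxE.
  by rewrite Bf_scale Bw exprVn sqr_sqrtr // mulrC.
have a_le : inf S <= Q / S2 by rewrite -qx; apply: ge_inf.
have a_ge : c0 <= inf S by apply: lb_le_inf; [by exists (qform e x) | exact: lbS].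
set a := inf S in a_le a_ge *.
have a_gt0 : 0 < a by apply: lt_le_trans c0_gt0 a_ge.
rewrite ler_pdivlMr //.
have aS2 : a * S2 <= Q by rewrite -ler_pdivlMr.
nra.
Qed.
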